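(* Let $C,E\in W^{(l)}\setminus\{0\}$, $m\in\mathbb{N}$ and $(\rho,\sigma)\in\mathfrak V$. If $[C,E]\neq0$, then $[C^m,E]\neq0$ and $\ell_{\rho,\sigma}([C^m,E])=m\,\ell_{\rho,\sigma}(C)^{m-1}\ell_{\rho,\sigma}([C,E])$. Moreover $[C^m,E]_{\rho,\sigma}\neq0$ if and only if $[C,E]_{\rho,\sigma}\neq0$.
   Context: $K$ is a field of characteristic zero, $l\in\mathbb{N}$. $W^{(l)}$ is the associative $K$-algebra with $K$-basis $\{X^{i/l}Y^j:i\in\mathbb{Z},j\in\mathbb{N}_0\}$, powers of $X$ multiplying as Laurent monomials and $[Y,X^\alpha]=\alpha X^{\alpha-1}$ for $\alpha\in\frac1l\mathbb{Z}$. $L^{(l)}=K[x^{\pm1/l},y]$, $\Psi^{(l)}(X^{i/l}Y^j)=x^{i/l}y^j$ ($K$-linear); supports are sets of exponents with nonzero coefficient. $\mathfrak V=\{(\rho,\sigma)\in\mathbb{Z}^2:\gcd(\rho,\sigma)=1,\rho+\sigma>0\}$. For $P\ne0$, $v_{\rho,\sigma}(P)=\max\{\rho a+\sigma b:(a,b)\in\mathrm{Supp}(P)\}$ and $\ell_{\rho,\sigma}(P)\in L^{(l)}$ = sum of terms of $\Psi^{(l)}(P)$ attaining it. $[P,Q]_{\rho,\sigma}:=0$ if $[P,Q]=0$ or $v_{\rho,\sigma}([P,Q])<v_{\rho,\sigma}(P)+v_{\rho,\sigma}(Q)-(\rho+\sigma)$, and $:=\ell_{\rho,\sigma}([P,Q])$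 otherwise. *)

(* Defs.v *)
From HB Require Import structures.
From mathcomp Require Import all_boot all_order all_algebra.
From mathcomp Require Import finmap monalg.
Set Implicit Arguments. Unset Strict Implicit. Unset Printing Implicit Defensive.
Import Order.TTheory GRing.Theory Num.Theory.
Local Open Scope ring_scope.

(* Elements of W^(l) (and of L^(l)) are finitely supported K-valued functions
   on the exponent lattice Z x N_0: the pair (i, j) encodes the basis element
   X^(i/l) Y^j of W^(l) (resp. the monomial x^(i/l) y^j of L^(l)).
   Psi^(l) is therefore the identity on the underlying coefficient functions;
   we keep two type names for readability. *)
Definition Wl (K : fieldType) := {malg K[(int * nat)%type]}.
Definition Ll (K : fieldType) := {malg K[(int * nat)%type]}.

Definition Psi (K : fieldType) (P : Wl K) : Ll K := P.

Section Defs.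
Variables (K : fieldType) (l : nat).

Definition ffact (a : int) (i : nat) : K :=
  \prod_(k < i) (a%:~R / l%:R - k%:R).

(* Product in W^(l):  X^(a/l) Y^j * X^(b/l) Y^k
     = sum_(i <= j) C(j,i) (b/l)_i X^((a+b-i l)/l) Y^(j+k-i),
   the normal-ordering formula forced by [Y, X^alpha] = alpha X^(alpha-1). *)
Definition wmul (P Q : Wl K) : Wl K :=
  \sum_(e <- enum_fset (msupp P)) \sum_(f <- enum_fset (msupp Q)) \sum_(i < e.2.+1)
    (P@_e * Q@_f * ('C(e.2, i))%:R * ffact f.1 i) *:
      << ((e.1 + f.1 - (i * l)%:Z)%R, (e.2 + f.2 - i)%N) >>.

Definition wone : Wl K := << ((0%:Z), 0%N) >>.
Definition wpow (P : Wl K) (m : nat) : Wl K := iter m (wmul P) wone.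
Definition wcomm (P Q : Wl K) : Wl K := wmul P Q - wmul Q P.

Definition lmul (P Q : Ll K) : Ll K :=
  \sum_(e <- enum_fset (msupp P)) \sum_(f <- enum_fset (msupp Q))
    (P@_e * Q@_f) *: << ((e.1 + f.1)%R, (e.2 + f.2)%N) >>.
Definition lone : Ll K := << ((0%:Z), 0%N) >>.
Definition lpow (P : Ll K) (m : nat) : Ll K := iter m (lmul P) lone.

Definition wval (rho sigma : int) (e : int * nat) : rat :=
  rho%:~R * (e.1%:~R / l%:R) + sigma%:~R * (e.2)%:R.

(* v_{rho,sigma}(P) = max over the support (meaningful for P != 0) *)
Definition vrs (rho sigma : int) (P : Wl K) : rat :=
  if enum_fset (msupp P) is e0 :: _ then
    \big[Num.max/wval rho sigma e0]_(e <- enum_fset (msupp P)) wval rho sigma e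
  else 0.

Definition lrs (rho sigma : int) (P : Wl K) : Ll K :=
  \sum_(e <- enum_fset (msupp P) | wval rho sigma e == vrs rho sigma P)
    (Psi P)@_e *: << e >>.

Definition brs (rho sigma : int) (P Q : Wl K) : Ll K :=
  if (wcomm P Q == 0) ||
     (vrs rho sigma (wcomm P Q) <
        vrs rho sigma P + vrs rho sigma Q - (rho + sigma)%:~R)
  then 0 else lrs rho sigma (wcomm P Q).

End Defs.

(* Main.v *)
Require Import Defs.
From HB Require Import structures.
From mathcomp Require Import all_boot all_order all_algebra.
From mathcomp Require Import finmap monalg.
From mathcomp Require Import ring lra zify.
Set Implicit Arguments. Unset Strict Implicit. Unset Printing Implicit Defensive.
Import Order.TTheory GRing.Theory Num.Theory.
Local Open Scope ring_scope.

Section Lin.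
Variables (K : fieldType) (I : choiceType) (V : lmodType K).

Definition lin (F : I -> V) (P : {malg K[I]}) : V :=
  \sum_(e <- enum_fset (msupp P)) P@_e *: F e.

Lemma linW (F : I -> V) P (S : {fset I}) : (msupp P `<=` S)%fset ->
  lin F P = \sum_(e <- S) P@_e *: F e.
Proof.
move=> sub; rewrite /lin; apply: (big_fset_incl _ sub) => x _.
by move/mcoeff_outdom => ->; rewrite scale0r.
Qed.

Lemma linD F P Q : lin F (P + Q) = lin F P + lin F Q.
Proof.
rewrite (@linW F (P + Q) (msupp P `|` msupp Q)%fset) ?msuppD_le //.
rewrite (@linW F P (msupp P `|` msupp Q)%fset) ?fsubsetUl //.
rewrite (@linW F Q (msupp P `|` msupp Q)%fset) ?fsubsetUr //.
rewrite -big_split /=; apply: eq_bigr => e _.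
by rewrite mcoeffD scalerDl.
Qed.

Lemma linZ F c P : lin F (c *: P) = c *: lin F P.
Proof.
rewrite (@linW F (c *: P) (msupp P)) ?msuppZ_le // /lin scaler_sumr.
by apply: eq_bigr => e _; rewrite mcoeffZ scalerA.
Qed.

Lemma lin0 F : lin F 0 = 0.
Proof. by rewrite /lin msupp0 big_nil. Qed.

Lemma linN F P : lin F (- P) = - lin F P.
Proof. by rewrite -(scaleN1r P) linZ scaleN1r. Qed.

Lemma linB F P Q : lin F (P - Q) = lin F P - lin F Q.
Proof. by rewrite linD linN. Qed.

Lemma linU F c k : lin F << c *g k >> = c *: F k.
Proof.
rewrite (@linW F _ [fset k]%fset) ?msuppU_le // big_seq_fset1.
by rewrite mcoeffUU.
Qed.

Lemma linU1 F k : lin F << k >> = F k.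
Proof. by rewrite linU scale1r. Qed.

Lemma lin_sumr (J : Type) (r : seq J) (F : J -> I -> V) P :
  lin (fun e => \sum_(j <- r) F j e) P = \sum_(j <- r) lin (F j) P.
Proof.
rewrite /lin (eq_bigr _ (fun e _ => scaler_sumr _ _ _ _)) /=.
by rewrite exchange_big.
Qed.

Lemma lin_addF F G P : lin (fun e => F e + G e) P = lin F P + lin G P.
Proof. by rewrite /lin -big_split; apply: eq_bigr => e _; rewrite scalerDr. Qed.

Lemma lin_ext F G P : (forall e, e \in msupp P -> F e = G e) -> lin F P = lin G P.
Proof.
move=> h; rewrite /lin big_seq_cond [RHS]big_seq_cond.
by apply: eq_bigr => e /andP[he _]; rewrite h.
Qed.



End Lin.

Lemma lin_id (K : fieldType) (I : choiceType) (P : {malg K[I]}) : lin (fun e => (<< e >> : {malg K[I]})) P = P.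
Proof.
rewrite [RHS]monalgE /lin; apply: eq_bigr => e _.
by apply/malgP => k; rewrite mcoeffZ !mcoeffU mulr_natr.
Qed.

Section LinMorph.
Variables (K : fieldType) (I : choiceType) (V W : lmodType K).

Lemma lin_morph (T : V -> W) (HT : forall c a b, T (c *: a + b) = c *: T a + T b)
   (F : I -> V) P : T (lin F P) = lin (fun e => T (F e)) P.
Proof.
have T0 : T 0 = 0.
  by move: (HT (-1) 0 0); rewrite scaler0 addr0 scaleN1r addNr.
rewrite /lin; elim: (enum_fset (msupp P)) => [|x s IH]; first by rewrite !big_nil.
by rewrite !big_cons HT IH.
Qed.
End LinMorph.

Section Coef.
Variables (K : fieldType) (I : choiceType).

Lemma lin_coef (J : choiceType) (F : I -> {malg K[J]}) P x :
  (lin F P)@_x = \sum_(e <- enum_fset (msupp P)) P@_e * (F e)@_x.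
Proof. rewrite /lin raddf_sum; apply: eq_bigr => e _; exact: mcoeffZ. Qed.

Lemma sum_delta (P : {malg K[I]}) (G : I -> K) g :
  (forall e, e \in msupp P -> e != g -> P@_e * G e = 0) ->
  \sum_(e <- enum_fset (msupp P)) P@_e * G e = P@_g * G g.
Proof.
move=> h; case: (boolP (g \in msupp P)) => hg.
  rewrite (big_fsetD1 g hg) /= big1_fset ?addr0 // => i; rewrite in_fsetD1 => /andP[hi1 hi2] _.
  exact: h.
rewrite big1_fset; first by rewrite mcoeff_outdom // mul0r.
move=> i hi _; apply: h => //; apply/eqP => ei; by rewrite -ei hi in hg.
Qed.
End Coef.

Section Vdm.
Variable (K : comNzRingType).
Definition pf (y : K) n := \prod_(k < n) (y - k%:R).

Lemma pfS y n : pf y n.+1 = pf y n * (y - n%:R).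
Proof. by rewrite /pf big_ord_recr. Qed.

Lemma pf0 y : pf y 0 = 1.
Proof. by rewrite /pf big_ord0. Qed.

Lemma vandermonde (y1 y2 : K) n :
  pf (y1 + y2) n = \sum_(i < n.+1) 'C(n, i)%:R * pf y1 i * pf y2 (n - i).
Proof.
elim: n => [|n IH].
  by rewrite big_ord1 /= !pf0 mulr1 mul1r.
rewrite pfS IH big_distrl /=.
have step : forall i : 'I_n.+1,
   'C(n, i)%:R * pf y1 i * pf y2 (n - i) * (y1 + y2 - n%:R) =
   'C(n, i)%:R * pf y1 i.+1 * pf y2 (n - i) + 'C(n, i)%:R * pf y1 i * pf y2 (n.+1 - i).
  move=> i; have hi : (i <= n)%N by rewrite -ltnS.
  rewrite pfS (subSn hi) pfS natrB //.
  ring.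
rewrite (eq_bigr _ (fun i _ => step i)) big_split /=.
have e2 : \sum_(i < n.+1) 'C(n, i)%:R * pf y1 i * pf y2 (n.+1 - i) =
   pf y2 n.+1 + \sum_(i < n.+1) 'C(n, i.+1)%:R * pf y1 i.+1 * pf y2 (n - i).
  have -> : \sum_(i < n.+1) 'C(n, i)%:R * pf y1 i * pf y2 (n.+1 - i) =
     \sum_(i < n.+2) 'C(n, i)%:R * pf y1 i * pf y2 (n.+1 - i).
    by rewrite [RHS]big_ord_recr /= bin_small // mul0r mul0r addr0.
  by rewrite big_ord_recl /= bin0 pf0 !mul1r subn0.
rewrite e2 [RHS]big_ord_recl /= bin0 pf0 !mul1r subn0.
rewrite addrCA; congr (_ + _).
rewrite -big_split /=; apply: eq_bigr => i _.
by rewrite binS natrD subSS mulrDl mulrDl addrC.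
Qed.
End Vdm.

Section Rep.
Variables (K : fieldType) (l : nat).
Hypothesis charK0 : [pchar K] =i pred0.
Hypothesis hl : (0 < l)%N.

Lemma natK_neq0 n : (0 < n)%N -> n%:R != 0 :> K.
Proof. by move=> hn; rewrite (pcharf0P K).1 // -lt0n. Qed.

Lemma lK_neq0 : l%:R != 0 :> K.
Proof. exact: natK_neq0. Qed.

Definition xof (a : int) : K := a%:~R / l%:R.

Lemma ffact_pf a n : ffact K l a n = pf (xof a) n.
Proof. by []. Qed.

Definition act (e : int * nat) (v : {malg K[int]}) : {malg K[int]} :=
  lin (fun c : int => ffact K l c e.2 *: << c + e.1 - (e.2 * l)%:Z >>) v.

Definition phi (P : Wl K) (v : {malg K[int]}) : {malg K[int]} :=
  lin (fun e => act e v) P.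

Definition mono (e f : int * nat) : Wl K :=
  \sum_(i < e.2.+1) (('C(e.2, i))%:R * ffact K l f.1 i) *:
      << ((e.1 + f.1 - (i * l)%:Z)%R, (e.2 + f.2 - i)%N) >>.

Lemma wmul_lin P Q : wmul l P Q = lin (fun e => lin (fun f => mono e f) Q) P.
Proof.
rewrite /wmul /lin; refine (eq_bigr _ (fun e _ => _)).
rewrite scaler_sumr; refine (eq_bigr _ (fun f _ => _)).
rewrite /mono scalerA scaler_sumr; refine (eq_bigr _ (fun i _ => _)).
by rewrite !scalerA !mulrA.
Qed.

Lemma actL e c a b : act e (c *: a + b) = c *: act e a + act e b.
Proof. by rewrite /act linD linZ. Qed.

Lemma lin_scaleF (I : choiceType) (V : lmodType K) (F : I -> V) c P :
  lin (fun e => c *: F e) P = c *: lin F P.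
Proof.
rewrite /lin scaler_sumr; apply: eq_bigr => e _.
by rewrite !scalerA mulrC.
Qed.

Lemma phiL P c a b : phi P (c *: a + b) = c *: phi P a + phi P b.
Proof.
rewrite /phi (lin_ext (G := fun e => c *: act e a + act e b)); last by move=> e _; rewrite actL.
by rewrite lin_addF lin_scaleF.
Qed.

Lemma phiD P Q v : phi (P + Q) v = phi P v + phi Q v.
Proof. by rewrite /phi linD. Qed.
Lemma phiZ c P v : phi (c *: P) v = c *: phi P v.
Proof. by rewrite /phi linZ. Qed.
Lemma phiB P Q v : phi (P - Q) v = phi P v - phi Q v.
Proof. by rewrite /phi linB. Qed.
Lemma phi0 v : phi 0 v = 0.
Proof. by rewrite /phi lin0. Qed.
Lemma phiU1 e v : phi << e >> v = act e v.
Proof. by rewrite /phi linU1. Qed.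

Lemma phi_linP P : forall c a b, phi (c *: a + b) P = c *: phi a P + phi b P.
Proof. by move=> c a b; rewrite phiD phiZ. Qed.

Lemma ffact_split c f2 n :
  ffact K l c (f2 + n) = ffact K l c f2 * ffact K l (c - (f2 * l)%:Z) n.
Proof.
rewrite /ffact big_split_ord /=; congr (_ * _); apply: eq_bigr => k _ /=.
have hlK := lK_neq0.
rewrite rmorphB /= natrD.
have -> : ((Posz (f2 * l))%:~R : K) = f2%:R * l%:R by rewrite -natrM.
by field.
Qed.


Lemma xofD a b : xof (a + b) = xof a + xof b.
Proof. by rewrite /xof rmorphD mulrDl. Qed.

Lemma scalar_id (e2 : nat) (f1 : int) (f2 : nat) (c : int) :
  \sum_(i < e2.+1) ('C(e2, i)%:R * ffact K l f1 i) * ffact K l c (e2 + f2 - i) =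
  ffact K l c f2 * ffact K l (c + f1 - (f2 * l)%:Z) e2.
Proof.
have -> : c + f1 - (f2 * l)%:Z = f1 + (c - (f2 * l)%:Z) by rewrite addrAC addrC addrA.
rewrite (ffact_pf (f1 + _)) xofD vandermonde mulr_sumr; apply: eq_bigr => i _.
have hi : (i <= e2)%N by rewrite -ltnS.
rewrite addnC -addnBA // ffact_split -!ffact_pf.
by rewrite mulrCA mulrA.
Qed.

Lemma phi_sum (I : Type) (r : seq I) (F : I -> Wl K) v :
  phi (\sum_(i <- r) F i) v = \sum_(i <- r) phi (F i) v.
Proof.
elim: r => [|x r IH]; first by rewrite !big_nil phi0.
by rewrite !big_cons phiD IH.
Qed.

Lemma actU1 e c : act e << c >> = ffact K l c e.2 *: << c + e.1 - (e.2 * l)%:Z >>.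
Proof. by rewrite /act linU1. Qed.

Lemma actZ e a v : act e (a *: v) = a *: act e v.
Proof. by rewrite /act linZ. Qed.

Lemma mono_act e f c : phi (mono e f) << c >> = act e (act f << c >>).
Proof.
rewrite /mono phi_sum !actU1 actZ actU1 scalerA.
have -> : \sum_(i < e.2.+1) phi (('C(e.2, i)%:R * ffact K l f.1 i) *:
      << ((e.1 + f.1 - (i * l)%:Z)%R, (e.2 + f.2 - i)%N) >>) << c >> =
   \sum_(i < e.2.+1) (('C(e.2, i)%:R * ffact K l f.1 i) * ffact K l c (e.2 + f.2 - i)) *:
      << c + f.1 - (f.2 * l)%:Z + e.1 - (e.2 * l)%:Z >>.
  apply: eq_bigr => i _; rewrite phiZ phiU1 actU1 /= scalerA; congr (_ *: << _ >>).
  have hi : (i <= e.2)%N by rewrite -ltnS.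
  rewrite mulnBl mulnDl; have : (i * l <= e.2 * l)%N by rewrite leq_mul2r hi orbT.
  move: (i * l)%N (e.2 * l)%N (f.2 * l)%N => a b d h; lia.
by rewrite -scaler_suml scalar_id.
Qed.

Lemma mono_act_gen e f v : phi (mono e f) v = act e (act f v).
Proof.
rewrite -(lin_id v) (lin_morph (T := fun x => phi (mono e f) x)); last exact: phiL.
rewrite (lin_morph (T := fun x => act e (act f x))); last first.
  by move=> c a b; rewrite !actL.
by apply: lin_ext => c _; rewrite mono_act.
Qed.

Lemma phi_mul P Q v : phi (wmul l P Q) v = phi P (phi Q v).
Proof.
rewrite wmul_lin.
rewrite (lin_morph (T := fun X => phi X v)); last by move=> c a b; rewrite phiD phiZ.
rewrite [RHS]/phi; apply: lin_ext => e _.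
rewrite (lin_morph (T := fun X => phi X v)); last by move=> c a b; rewrite phiD phiZ.
rewrite [phi Q v]/phi (lin_morph (T := act e)); last exact: actL.
by apply: lin_ext => f _; rewrite mono_act_gen.
Qed.

Lemma xof_nat j : xof (Posz (j * l)) = j%:R.
Proof.
rewrite /xof; have -> : ((Posz (j * l))%:~R : K) = j%:R * l%:R by rewrite -natrM.
by rewrite mulfK // lK_neq0.
Qed.

Lemma ffact_big j n : (j < n)%N -> ffact K l (Posz (j * l)) n = 0.
Proof.
move=> hjn; rewrite ffact_pf xof_nat /pf (bigD1 (Ordinal hjn)) //= subrr mul0r //.
Qed.

Lemma ffact_eq j : ffact K l (Posz (j * l)) j != 0.
Proof.
rewrite ffact_pf xof_nat /pf; apply/prodf_neq0 => k _.
have hk : (k <= j)%N by apply: ltnW.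
by rewrite -natrB // natK_neq0 // subn_gt0.
Qed.

Lemma phi_faithful P : (forall c, phi P << c >> = 0) -> P = 0.
Proof.
move=> H; apply/malgP => e; rewrite mcoeff0.
suff : forall j (e : int * nat), e.2 = j -> P@_e = 0 by move/(_ e.2 e erefl).
elim/ltn_ind => j IH {}e he.
have := congr1 (mcoeff e.1) (H (Posz (j * l))).
rewrite mcoeff0 /phi lin_coef.
rewrite (eq_bigr (fun e' => P@_e' * (ffact K l (Posz (j * l)) e'.2 *
            (1 *+ ((Posz (j * l) + e'.1 - (e'.2 * l)%:Z) == e.1))))); last first.
  by move=> e' _; rewrite actU1 mcoeffZ mcoeffU.
rewrite (sum_delta (g := e)); last first.
  move=> e' he' ne'.
  case: (ltngtP e'.2 j) => h2.
  - by rewrite (IH _ h2 e' erefl) mul0r.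
  - by rewrite ffact_big // mul0r mulr0.
  rewrite h2 addrAC subrr add0r.
  case: eqP => [h1|]; last by rewrite mulr0n !mulr0.
  by move: ne'; case: e' h1 h2 {he'} => a b /= -> ->; case: (e) he => c d /= ->; rewrite eqxx.
rewrite he addrAC subrr add0r eqxx mulr1n mulr1 => /eqP.
by rewrite mulf_eq0 (negbTE (ffact_eq j)) orbF => /eqP.
Qed.

End Rep.

Lemma act0 (K : fieldType) (l : nat) (v : {malg K[int]}) : act l (0, 0%N) v = v.
Proof.
rewrite /act.
rewrite -[in RHS](lin_id v).
apply: lin_ext => c _ /=.
rewrite /ffact big_ord0 scale1r mul0n.
by rewrite addr0 subr0.
Qed.

Section Rep2.
Variables (K : fieldType) (l : nat).
Hypothesis charK0 : [pchar K] =i pred0.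
Hypothesis hl : (0 < l)%N.
Local Notation phi := (@phi K l).
Lemma phi_inj P Q : (forall v, phi P v = phi Q v) -> P = Q.
Proof.
move=> h; apply/eqP; rewrite -subr_eq0; apply/eqP; apply: (phi_faithful charK0 hl) => c.
by rewrite phiB h subrr.
Qed.
Lemma phiL_B P a b : phi P (a - b) = phi P a - phi P b.
Proof. have h := @phiL K l P (-1) b a; rewrite !scaleN1r in h; by rewrite addrC h addrC. Qed.
Lemma phiL_D P a b : phi P (a + b) = phi P a + phi P b.
Proof. have h := @phiL K l P 1 a b; rewrite !scale1r in h; exact: h. Qed.

Lemma phiN P v : phi (- P) v = - phi P v.
Proof. by rewrite /phi linN. Qed.
Lemma phiL_N P a : phi P (- a) = - phi P a.
Proof.
have h0 : phi P 0 = 0.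
  have h := phiL_D P 0 0; rewrite addr0 in h.
  by apply: (@addrI _ (phi P 0)); rewrite addr0 -h.
have h := phiL_B P 0 a; rewrite sub0r in h; by rewrite h h0 sub0r.
Qed.
Lemma wone_id v : phi (wone K) v = v.
Proof. by rewrite /wone phiU1 act0. Qed.

Lemma wmulA (P Q R : Wl K) : wmul l (wmul l P Q) R = wmul l P (wmul l Q R).
Proof. apply: phi_inj => v. erewrite !(phi_mul charK0 hl). done. Qed.

Lemma wmul1 (P : Wl K) : wmul l P (wone K) = P.
Proof. apply: phi_inj => v; erewrite (phi_mul charK0 hl). by rewrite wone_id. Qed.

Lemma wcomm_pow (C E : Wl K) k :
  wcomm l (wpow l C k.+1) E =
  wmul l C (wcomm l (wpow l C k) E) + wmul l (wcomm l C E) (wpow l C k).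
Proof.
apply: phi_inj => v; rewrite /wcomm.
have -> : wpow l C k.+1 = wmul l C (wpow l C k) by [].
erewrite !phiD, !phiN, !(phi_mul charK0 hl), !phiD, !phiN, !(phi_mul charK0 hl), phiL_D, phiL_N.
by rewrite addrA subrK.
Qed.
End Rep2.

Lemma bigmax_props (I : eqType) (s : seq I) (x0 : rat) (F : I -> rat) :
  let B := \big[Num.max/x0]_(e <- s) F e in
  [/\ x0 <= B, (forall e, e \in s -> F e <= B) & (B = x0 \/ exists2 e, e \in s & B = F e)].
Proof.
elim: s => [|x s [IH1 IH2 IH3]] /=; first by rewrite big_nil; split; [ | move=> e; rewrite in_nil | left]...
rewrite big_cons; set B := \big[_/_]_(_ <- _) _ in IH1 IH2 IH3 *.
split.
- by rewrite le_max IH1 orbT.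
- move=> e; rewrite in_cons => /orP[/eqP->|he]; first by rewrite le_max lexx.
  by rewrite le_max IH2 ?orbT.
- rewrite maxEle; case: ifP => _; last by right; exists x; rewrite ?mem_head.
  case: IH3 => [->|[e he ->]]; first by left.
  by right; exists e; rewrite // in_cons he orbT.
Qed.

Section Lead.
Variables (K : fieldType) (l : nat) (rho sigma : int).
Local Notation w := (wval l rho sigma).
Local Notation vrs := (vrs l rho sigma).
Local Notation lrs := (lrs l rho sigma).

Lemma vrs_ge (P : Wl K) e : e \in msupp P -> w e <= vrs P.
Proof.
rewrite /vrs /Defs.vrs; move=> he.
have : e \in enum_fset (msupp P) by [].
case: (enum_fset (msupp P)) => [|e0 s] //.
by move=> hs; have [_ h _] := bigmax_props (e0 :: s) (w e0) w; apply: h.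
Qed.

Lemma vrs_att (P : Wl K) : P != 0 -> exists2 e, e \in msupp P & w e = vrs P.
Proof.
move=> hP; rewrite /vrs /Defs.vrs.
have : enum_fset (msupp P) != [::].
  apply: contra hP => /eqP h; rewrite [P]monalgE.
  by rewrite h big_nil.
have hin : forall x, (x \in enum_fset (msupp P)) = (x \in msupp P) by [].
case: (enum_fset (msupp P)) hin => [|e0 s] // hin _.
have [_ _ [h|[e he h]]] := bigmax_props (e0 :: s) (w e0) w.
  by exists e0; rewrite -?hin ?mem_head // h.
by exists e; rewrite -?hin // h.
Qed.


Lemma lrs_coef (P : Wl K) g : (lrs P)@_g = if w g == vrs P then P@_g else 0.
Proof.
rewrite /lrs /Defs.lrs /Psi raddf_sum /= big_mkcond /=.
rewrite (eq_bigr (fun e => P@_e * (if w e == vrs P then 1 *+ (e == g) else 0))); last first.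
  move=> e _; case: ifP => _; last by rewrite mulr0.
  by rewrite mcoeffZ mcoeffU.
rewrite (sum_delta (g := g)); last first.
  by move=> e _ /negbTE neg; case: ifP => _; rewrite ?neg ?mulr0n mulr0.
by case: ifP => _; rewrite ?eqxx ?mulr1n ?mulr1 ?mulr0.
Qed.

Lemma lrs_on (P : Wl K) g : w g = vrs P -> (lrs P)@_g = P@_g.
Proof. by move=> h; rewrite lrs_coef h eqxx. Qed.

Lemma lrs_off (P : Wl K) g : w g != vrs P -> (lrs P)@_g = 0.
Proof. by move=> h; rewrite lrs_coef (negbTE h). Qed.

Lemma vrs_gt (P : Wl K) g : vrs P < w g -> P@_g = 0.
Proof.
move=> h; apply: mcoeff_outdom; apply/negP => /vrs_ge hg.
by move: (lt_le_trans h hg); rewrite ltxx.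
Qed.

Lemma lrs_neq0 (P : Wl K) : P != 0 -> lrs P != 0.
Proof.
move=> /vrs_att [e he hw]; apply/negP => /eqP h0.
move: he; rewrite -mcoeff_neq0 -(lrs_on hw) h0 mcoeff0; by rewrite eqxx.
Qed.

Lemma topP (R T : Wl K) (w0 : rat) :
  (forall g, w0 < w g -> R@_g = 0) ->
  (forall g, w g = w0 -> R@_g = T@_g) ->
  (forall g, w g != w0 -> T@_g = 0) ->
  T != 0 ->
  [/\ R != 0, vrs R = w0 & lrs R = T].
Proof.
move=> h1 h2 h3 hT.
have [g hg] : exists g, T@_g != 0.
  by have [g hg _] := vrs_att hT; exists g; rewrite mcoeff_neq0.
have hwg : w g = w0 by apply/eqP; apply: contraR hg => /h3 ->; rewrite eqxx.
have hR : R != 0 by apply: contraNneq hg => hR0; rewrite -h2 // hR0 mcoeff0.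
have hv : vrs R = w0.
  have [e he hwe] := vrs_att hR.
  have le1 : vrs R <= w0.
    rewrite -hwe; rewrite leNgt; apply/negP => /h1 h.
    by move: he; rewrite -mcoeff_neq0 h eqxx.
  have le2 : w0 <= vrs R.
    rewrite -hwg; apply: vrs_ge; rewrite -mcoeff_neq0 h2 //.
  by apply/eqP; rewrite eq_le le1 le2.
split => //; apply/malgP => x; rewrite lrs_coef hv.
case: eqP => [/h2 //|/eqP hx]; by rewrite h3.
Qed.

End Lead.

Definition padd (e f : int * nat) : int * nat := ((e.1 + f.1)%R, (e.2 + f.2)%N).

Section LMul.
Variables (K : fieldType).

Lemma lmul_lin (A B : Ll K) : lmul A B = lin (fun e => lin (fun f => (<< padd e f >> : Ll K)) B) A.
Proof.
rewrite /lmul /lin; refine (eq_bigr _ (fun e _ => _)).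
rewrite scaler_sumr; refine (eq_bigr _ (fun f _ => _)).
by rewrite scalerA.
Qed.

Lemma lin_swap (V : lmodType K) (G : int * nat -> int * nat -> V) (A B : Ll K) :
  lin (fun e => lin (G e) B) A = lin (fun f => lin (fun e => G e f) A) B.
Proof.
rewrite /lin (eq_bigr _ (fun e _ => scaler_sumr _ _ _ _)) /= exchange_big /=.
apply: eq_bigr => f _; rewrite scaler_sumr; apply: eq_bigr => e _.
by rewrite !scalerA mulrC.
Qed.

Lemma paddC e f : padd e f = padd f e.
Proof. by rewrite /padd addrC addnC. Qed.

Lemma paddA e f g : padd e (padd f g) = padd (padd e f) g.
Proof. by rewrite /padd /= addrA addnA. Qed.

Lemma lmulC (A B : Ll K) : lmul A B = lmul B A.
Proof.
erewrite !lmul_lin, lin_swap; apply: lin_ext => f _; apply: lin_ext => e _.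
by rewrite paddC.
Qed.

Lemma lmulZl c (A B : Ll K) : lmul (c *: A) B = c *: lmul A B.
Proof. by rewrite !lmul_lin linZ. Qed.

Lemma lmulZr c (A B : Ll K) : lmul A (c *: B) = c *: lmul A B.
Proof. by rewrite lmulC lmulZl lmulC. Qed.

Lemma lin_lin (V : lmodType K) (G : int * nat -> V) (F : int * nat -> Ll K) (P : Ll K) :
  lin G (lin F P) = lin (fun e => lin G (F e)) P.
Proof. by apply: lin_morph => c a b; rewrite linD linZ. Qed.

Lemma lmulA (A B D : Ll K) : lmul A (lmul B D) = lmul (lmul A B) D.
Proof.
erewrite !lmul_lin, lin_lin.
apply: lin_ext => e _.
erewrite !lin_lin.
apply: lin_ext => f _.
erewrite !linU1, lin_lin.
apply: lin_ext => h _; erewrite !linU1, paddA; reflexivity.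
Qed.


Lemma lin_coefW (J : choiceType) (F : int * nat -> {malg K[J]}) (A : Ll K) (S : {fset int * nat}) x :
  (msupp A `<=` S)%fset -> (lin F A)@_x = \sum_(e <- S) A@_e * (F e)@_x.
Proof.
move=> sub; rewrite (linW _ sub) raddf_sum; apply: eq_bigr => e _; exact: mcoeffZ.
Qed.

Lemma lmul1 (A : Ll K) : lmul (lone K) A = A.
Proof.
rewrite lmul_lin /lone linU1 -[RHS]lin_id; apply: lin_ext => f _.
by case: f => a b; rewrite /padd /= add0r.
Qed.

Lemma lmul_coef (A B : Ll K) g :
  (lmul A B)@_g = \sum_(e <- enum_fset (msupp A)) A@_e *
     \sum_(f <- enum_fset (msupp B)) B@_f * (1 *+ (padd e f == g)).
Proof.
rewrite lmul_lin lin_coef; apply: eq_bigr => e _; rewrite lin_coef.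
by congr (_ * _); apply: eq_bigr => f _; rewrite mcoeffU.
Qed.

Lemma lexmax (s : seq (int * nat)) : s != [::] ->
  exists2 a, a \in s & forall e, e \in s -> (e.1 < a.1) || ((e.1 == a.1) && (e.2 <= a.2)%N).
Proof.
elim: s => [//|x s IH] _.
case: (altP (s =P [::])) => [->|hs].
  by exists x; rewrite ?mem_head // => e; rewrite inE => /eqP ->; rewrite eqxx leqnn orbT.
have [a ha hmax] := IH hs.
case: (boolP ((x.1 < a.1) || ((x.1 == a.1) && (x.2 <= a.2)%N))) => hxa.
  exists a; first by rewrite in_cons ha orbT.
  by move=> e; rewrite in_cons => /orP[/eqP->|/hmax].
exists x; first exact: mem_head.
move=> e; rewrite in_cons => /orP[/eqP->|/hmax he]; first by rewrite eqxx leqnn orbT.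
move: hxa he; case: x {IH hs} => x1 x2; case: a {ha hmax} => a1 a2; case: e => e1 e2 /=; lia.
Qed.


Lemma supp_nil (A : Ll K) : A != 0 -> enum_fset (msupp A) != [::].
Proof.
move=> hA; apply: contra hA => /eqP h; rewrite [A]monalgE.
by rewrite h big_nil.
Qed.

Lemma lmul_neq0 (A B : Ll K) : A != 0 -> B != 0 -> lmul A B != 0.
Proof.
move=> /supp_nil /lexmax [a ha hmA] /supp_nil /lexmax [b hb hmB].
apply/negP => /eqP h0; move: (congr1 (mcoeff (padd a b)) h0).
rewrite mcoeff0 lmul_coef (sum_delta (g := a)); last first.
  move=> e he hea; rewrite big1_seq ?mulr0 // => f /andP[_ hf].
  have := hmA e he; have := hmB f hf; move: hea.
  case: (padd e f =P padd a b) => [|_]; last by rewrite mulr0n mulr0.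
  rewrite /padd; case: e {he} => e1 e2; case: f {hf} => f1 f2; case: a {ha hmA} => a1 a2;
    case: b {hb hmB} => b1 b2 /= [h1 h2]; rewrite xpair_eqE; lia.
rewrite (sum_delta (g := b)); last first.
  move=> f hf hfb; case: (padd a f =P padd a b) => [|_]; last by rewrite mulr0n mulr0.
  rewrite /padd; move: hfb; case: f {hf} => f1 f2; case: b {hb hmB} => b1 b2 /= hne [h1 h2].
  by move: hne; rewrite xpair_eqE; lia.
rewrite eqxx mulr1n mulr1 => /eqP; rewrite mulf_eq0 !mcoeff_eq0.
by rewrite [a \in _]ha [b \in _]hb.
Qed.

End LMul.

Definition gi (l : nat) (e f : int * nat) (i : nat) : int * nat :=
  ((e.1 + f.1 - (i * l)%:Z)%R, (e.2 + f.2 - i)%N).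

Section Mult.
Variables (K : fieldType) (l : nat) (rho sigma : int).
Hypothesis hl : (0 < l)%N.
Hypothesis hpos : 0 < rho + sigma.
Local Notation w := (wval l rho sigma).
Local Notation vrs := (@vrs K l rho sigma).
Local Notation lrs := (@lrs K l rho sigma).

Lemma lQ_neq0 : (l%:R : rat) != 0.
Proof. by rewrite pnatr_eq0 -lt0n. Qed.

Lemma wval_padd e f : w (padd e f) = w e + w f.
Proof.
rewrite /wval /padd /= rmorphD natrD /=.
have := lQ_neq0 => hl0; field; exact: hl0.
Qed.

Lemma wval_gi e f (i : nat) : (i <= e.2)%N ->
  w (gi l e f i) = w e + w f - i%:R * (rho + sigma)%:~R.
Proof.
move=> hi; rewrite /wval /gi /= !rmorphB !rmorphD /= natrB ?natrD; last first.
  exact: (leq_trans hi (leq_addr _ _)).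
have -> : ((Posz (i * l))%:~R : rat) = i%:R * l%:R by rewrite -natrM.
have := lQ_neq0 => hl0; field; exact: hl0.
Qed.

Lemma key_term (P Q : Wl K) e f (i : nat) g :
  e \in msupp P -> f \in msupp Q -> (i <= e.2)%N ->
  vrs P + vrs Q <= w g -> gi l e f i = g ->
  [/\ i = 0%N, w e = vrs P, w f = vrs Q & w g = vrs P + vrs Q].
Proof.
move=> he hf hi hg hgi.
have h1 := vrs_ge l rho sigma he; have h2 := vrs_ge l rho sigma hf.
have hw := wval_gi f hi; rewrite hgi in hw.
have hr : 0 < ((rho + sigma)%:~R : rat) by rewrite ltr0z.
have hi0 : i = 0%N.
  case: i hi hw hgi => // i _ hw _.
  have : 0 < (i.+1)%:R * ((rho + sigma)%:~R : rat) by rewrite mulr_gt0 // ltr0n.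
  move: hg h1 h2; rewrite hw; set X := (_ * _) => hg h1 h2 hX.
  exfalso; move: hg h1 h2 hX; clear; lra.
move: hw; rewrite hi0 mul0r subr0 => hw.
split => //; move: hg h1 h2; rewrite hw; clear; lra.
Qed.

Lemma wmul_coef (P Q : Wl K) g :
  (wmul l P Q)@_g = \sum_(e <- enum_fset (msupp P)) P@_e *
    \sum_(f <- enum_fset (msupp Q)) Q@_f *
      \sum_(i < e.2.+1) ('C(e.2, i)%:R * ffact K l f.1 i) * (1 *+ (gi l e f i == g)).
Proof.
erewrite wmul_lin; rewrite lin_coef; apply: eq_bigr => e _; rewrite lin_coef.
congr (_ * _); apply: eq_bigr => f _; congr (_ * _).
rewrite /mono raddf_sum; apply: eq_bigr => i _.
by apply: etrans (mcoeffZ _ _ _) _; rewrite mcoeffU.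
Qed.


Lemma msupp_lrs (P : Wl K) : (msupp (lrs P) `<=` msupp P)%fset.
Proof.
apply/fsubsetP => e; rewrite -!mcoeff_neq0 lrs_coef.
by case: ifP => _ // /eqP h; exfalso; apply: h.
Qed.

Lemma lrs_supp_w (P : Wl K) e : e \in msupp (lrs P) -> w e = vrs P.
Proof.
rewrite -mcoeff_neq0 lrs_coef; case: ifP => [/eqP //|_]; by rewrite eqxx.
Qed.

Lemma sum_i_zero e f g :
  (forall i : nat, (i <= e.2)%N -> gi l e f i != g) ->
  \sum_(i < e.2.+1) ('C(e.2, i)%:R * ffact K l f.1 i) * (1 *+ (gi l e f i == g)) = 0.
Proof.
move=> h; apply: big1 => i _; rewrite (negbTE (h i _)) ?mulr0n ?mulr0 //.
by rewrite -ltnS.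
Qed.

Lemma sum_i_one e f g :
  (forall i : nat, (0 < i <= e.2)%N -> gi l e f i != g) ->
  \sum_(i < e.2.+1) ('C(e.2, i)%:R * ffact K l f.1 i) * (1 *+ (gi l e f i == g)) =
  1 *+ (padd e f == g).
Proof.
move=> h; rewrite big_ord_recl /= big1 ?addr0; last first.
  move=> i _; rewrite (negbTE (h i.+1 _)) ?mulr0n ?mulr0 //.
  by rewrite /= -ltnS; case: i.
rewrite bin0 /ffact big_ord0 !mul1r.
by have -> : gi l e f 0 = padd e f by rewrite /gi /padd mul0n subr0 subn0.
Qed.

Lemma wmul_lead (P Q : Wl K) : P != 0 -> Q != 0 ->
  [/\ wmul l P Q != 0, vrs (wmul l P Q) = vrs P + vrs Q
    & lrs (wmul l P Q) = lmul (lrs P) (lrs Q)].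
Proof.
move=> hP hQ; apply: topP.
- move=> g hg; rewrite wmul_coef big1_seq // => e /andP[_ he].
  rewrite big1_seq ?mulr0 // => f /andP[_ hf].
  rewrite sum_i_zero ?mulr0 // => i hi; apply/eqP => hgi.
  have [_ _ _ hw] := key_term he hf hi (ltW hg) hgi.
  by move: hg; rewrite hw ltxx.
- move=> g hg; have hle : vrs P + vrs Q <= w g by rewrite hg.
  rewrite wmul_coef.
  erewrite lmul_lin; rewrite (lin_coefW _ _ (msupp_lrs P)).
  apply: eq_big_seq => e he.
  rewrite (lin_coefW _ _ (msupp_lrs Q)).
  case: (eqVneq (w e) (vrs P)) => hwe; last first.
    rewrite (lrs_off hwe) mul0r big1_seq ?mulr0 // => f /andP[_ hf].
    rewrite sum_i_zero ?mulr0 // => i hi; apply/eqP => hgi.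
    have [_ hw _ _] := key_term he hf hi hle hgi.
    by move: hwe; rewrite hw eqxx.
  rewrite (lrs_on hwe); congr (_ * _); apply: eq_big_seq => f hf.
  case: (eqVneq (w f) (vrs Q)) => hwf; last first.
    rewrite (lrs_off hwf) mul0r sum_i_zero ?mulr0 // => i hi; apply/eqP => hgi.
    have [_ _ hw _] := key_term he hf hi hle hgi.
    by move: hwf; rewrite hw eqxx.
  rewrite (lrs_on hwf) mcoeffU sum_i_one // => i /andP[hi0 hi]; apply/eqP => hgi.
  have [hi' _ _ _] := key_term he hf hi hle hgi.
  by rewrite hi' in hi0.
- move=> g hg; rewrite lmul_coef big1_seq // => e /andP[_ he].
  rewrite big1_seq ?mulr0 // => f /andP[_ hf].
  case: eqP => [hpg|]; last by rewrite mulr0n mulr0.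
  move: hg; rewrite -hpg wval_padd (lrs_supp_w he) (lrs_supp_w hf) eqxx //.
- by apply: lmul_neq0; apply: lrs_neq0.
Qed.

End Mult.

Section Abstract.
Variables (K : fieldType) (A L : lmodType K) (I : choiceType).
Variables (mul : A -> A -> A) (one : A) (vr : A -> rat) (lr : A -> L)
  (lm : L -> L -> L) (lone : L) (w : I -> rat) (co : I -> A -> K) (coL : I -> L -> K).
Hypothesis charK0 : [pchar K] =i pred0.
Hypothesis Hlead : forall P Q, P != 0 -> Q != 0 ->
  [/\ mul P Q != 0, vr (mul P Q) = vr P + vr Q & lr (mul P Q) = lm (lr P) (lr Q)].
Hypothesis Hone : [/\ one != 0, vr one = 0 & lr one = lone].
Hypothesis Htop : forall (R : A) (T : L) (w0 : rat),
  (forall g, w0 < w g -> co g R = 0) ->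
  (forall g, w g = w0 -> co g R = coL g T) ->
  (forall g, w g != w0 -> coL g T = 0) ->
  T != 0 -> [/\ R != 0, vr R = w0 & lr R = T].
Hypothesis Hgt : forall P g, vr P < w g -> co g P = 0.
Hypothesis Hon : forall P g, w g = vr P -> coL g (lr P) = co g P.
Hypothesis Hoff : forall P g, w g != vr P -> coL g (lr P) = 0.
Hypothesis Hneq : forall P, P != 0 -> lr P != 0.
Hypothesis coD : forall g P Q, co g (P + Q) = co g P + co g Q.
Hypothesis coLD : forall g P Q, coL g (P + Q) = coL g P + coL g Q.
Hypothesis lmZr : forall c a b, lm a (c *: b) = c *: lm a b.
Hypothesis lmA : forall a b c, lm a (lm b c) = lm (lm a b) c.
Hypothesis lmC : forall a b, lm a b = lm b a.
Hypothesis lm1 : forall a, lm lone a = a.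
Hypothesis lm_neq0 : forall a b, a != 0 -> b != 0 -> lm a b != 0.
Hypothesis mul1 : forall P, mul P one = P.

Definition apow (C : A) k := iter k (mul C) one.
Definition lpw (a : L) k := iter k (lm a) lone.
Definition acomm P Q := mul P Q - mul Q P.
Hypothesis Hcp : forall C E k,
  acomm (apow C k.+1) E = mul C (acomm (apow C k) E) + mul (acomm C E) (apow C k).

Lemma natK_neq0' n : (0 < n)%N -> n%:R != 0 :> K.
Proof. by move=> hn; rewrite (pcharf0P K).1 // -lt0n. Qed.

Lemma apow_lead C k : C != 0 ->
  [/\ apow C k != 0, vr (apow C k) = k%:R * vr C & lr (apow C k) = lpw (lr C) k].
Proof.
move=> hC; elim: k => [|k [h1 h2 h3]]; first by rewrite mul0r.
have [g1 g2 g3] := Hlead hC h1.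
split => //=.
- by rewrite g2 h2 -[k.+1]addn1 natrD mulrDl mul1r addrC.
- by rewrite g3 h3.
Qed.

Lemma acomm_lead C E k : C != 0 -> E != 0 -> acomm C E != 0 ->
  [/\ acomm (apow C k.+1) E != 0,
      vr (acomm (apow C k.+1) E) = k%:R * vr C + vr (acomm C E)
    & lr (acomm (apow C k.+1) E) = k.+1%:R *: lm (lpw (lr C) k) (lr (acomm C E))].
Proof.
move=> hC hE hCE; elim: k => [|k [h1 h2 h3]].
  have e1 : apow C 1 = C by exact: mul1.
  by rewrite e1 mul0r add0r scale1r lm1.
have [p1 p2 p3] := apow_lead k.+1 hC.
have [x1 x2 x3] := Hlead hC h1.
have [y1 y2 y3] := Hlead hCE p1.
rewrite Hcp.
set X := mul C _ in x1 x2 x3 *; set Y := mul (acomm C E) _ in y1 y2 y3 *.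
set w0 := k.+1%:R * vr C + vr (acomm C E).
have vX : vr X = w0 by rewrite x2 h2 /w0 -[k.+1]addn1 natrD; ring.
have vY : vr Y = w0 by rewrite y2 p2 /w0 addrC.
have eT : lr X + lr Y = k.+2%:R *: lm (lpw (lr C) k.+1) (lr (acomm C E)).
  rewrite x3 h3 y3 p3 lmZr lmA (lmC (lr (acomm C E))) /=.
  by rewrite -[k.+2]addn1 natrD scalerDl scale1r.
have hT : lr X + lr Y != 0.
  rewrite eT scaler_eq0 negb_or (natK_neq0' (n := k.+2)) // andTb.
  by apply: lm_neq0; [rewrite -p3; apply: Hneq | apply: Hneq].
have [r1 r2 r3] := Htop (R := X + Y) (T := lr X + lr Y) (w0 := w0)
  (fun g hg => ltac:(rewrite coD !Hgt ?addr0 // ?vX ?vY //))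
  (fun g hg => ltac:(rewrite !coLD !Hon // ?vX ?vY //))
  (fun g hg => ltac:(rewrite coLD !Hoff ?addr0 // ?vX ?vY //)) hT.
by split => //; rewrite -eT.
Qed.

End Abstract.

Lemma w00 l rho sigma : wval l rho sigma (0, 0%N) = 0.
Proof. by rewrite /wval /= mul0r mulr0 mulr0 addr0. Qed.

Lemma wone_lead (K : fieldType) l rho sigma :
  [/\ wone K != 0, vrs l rho sigma (wone K) = 0 & lrs l rho sigma (wone K) = lone K].
Proof.
apply: topP.
- move=> g hg; rewrite /wone mcoeffU; case: eqP => [e|]; last by rewrite mulr0n.
  by move: hg; rewrite -e w00 ltxx.
- by [].
- move=> g hg; rewrite /lone mcoeffU; case: eqP => [e|]; last by rewrite mulr0n.
  by move: hg; rewrite -e w00 eqxx.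
- by rewrite /lone monalgU_eq0 oner_eq0.
Qed.

Lemma brs_neq0 (K : fieldType) l rho sigma (P Q : Wl K) : wcomm l P Q != 0 ->
  (brs l rho sigma P Q != 0) =
  ~~ (vrs l rho sigma (wcomm l P Q) < vrs l rho sigma P + vrs l rho sigma Q - (rho + sigma)%:~R).
Proof.
rewrite /brs; move: (wcomm l P Q) => X hX.
rewrite (negbTE hX) /=; case: ifP => _; first by rewrite eqxx.
exact: lrs_neq0.
Qed.

Lemma ineq_shift (k : nat) (a b c s : rat) :
  (k%:R * a + b < k.+1%:R * a + c - s) = (b < a + c - s).
Proof.
have -> : k.+1%:R * a + c - s = k%:R * a + (a + c - s).
  by rewrite -[k.+1]addn1 natrD; ring.
by rewrite ltrD2l.
Qed.

Theorem lemma2p13 (K : fieldType) (charK0 : [pchar K] =i pred0)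
  (l : nat) (hl : (0 < l)%N) (C E : Wl K) (m : nat) (hm : (0 < m)%N)
  (rho sigma : int) (hgcd : gcdz rho sigma = 1%N) (hpos : 0 < rho + sigma) :
  C != 0 -> E != 0 -> wcomm l C E != 0 ->
  [/\ wcomm l (wpow l C m) E != 0,
      lrs l rho sigma (wcomm l (wpow l C m) E)
        = m%:R *: lmul (lpow (lrs l rho sigma C) m.-1)
                       (lrs l rho sigma (wcomm l C E))
    & (brs l rho sigma (wpow l C m) E != 0 <-> brs l rho sigma C E != 0)].
Proof.
move=> hC hE hCE.
case: m hm => [//|m _].
have HA := @acomm_lead K (Wl K) (Ll K) _ (wmul l) (wone K) (vrs l rho sigma) (lrs l rho sigma)
  (@lmul K) (lone K) (wval l rho sigma) (fun g P => P@_g) (fun g P => P@_g) charK0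
  (fun P Q hP hQ => wmul_lead hl hpos hP hQ) (wone_lead K l rho sigma)
  (fun R T w0 h1 h2 h3 hT => topP h1 h2 h3 hT)
  (fun P g h => vrs_gt h) (fun P g h => lrs_on h) (fun P g h => lrs_off h)
  (fun P h => lrs_neq0 l rho sigma h)
  (fun g P Q => mcoeffD g P Q) (fun g P Q => mcoeffD g P Q)
  (@lmulZr K) (@lmulA K) (@lmulC K) (@lmul1 K) (@lmul_neq0 K) (wmul1 charK0 hl)
  (fun C E k => wcomm_pow charK0 hl C E k).
have HP := @apow_lead K (Wl K) (Ll K) (wmul l) (wone K) (vrs l rho sigma) (lrs l rho sigma)
  (@lmul K) (lone K)
  (fun P Q hP hQ => wmul_lead hl hpos hP hQ) (wone_lead K l rho sigma).
have [c1 c2 c3] : [/\ wcomm l (wpow l C m.+1) E != 0,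
      vrs l rho sigma (wcomm l (wpow l C m.+1) E) = m%:R * vrs l rho sigma C + vrs l rho sigma (wcomm l C E)
    & lrs l rho sigma (wcomm l (wpow l C m.+1) E) =
         m.+1%:R *: lmul (lpow (lrs l rho sigma C) m) (lrs l rho sigma (wcomm l C E))]
  := HA C E m hC hE hCE.
have [_ p2 _] : [/\ wpow l C m.+1 != 0, vrs l rho sigma (wpow l C m.+1) = m.+1%:R * vrs l rho sigma C & _]
  := HP C m.+1 hC.
split; [exact: c1 | exact: c3 | ].
have e : (brs l rho sigma (wpow l C m.+1) E != 0) = (brs l rho sigma C E != 0).
  apply: (etrans (brs_neq0 rho sigma c1)); apply: esym.
  apply: (etrans (brs_neq0 rho sigma hCE)); apply: esym.
  erewrite c2, p2; congr (~~ _).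
  exact: ineq_shift.
by split => H; [exact: (etrans (esym e) H) | exact: (etrans e H)].
Qed.
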